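(* Let $u,s,s',V,\alpha$ be real numbers and set $$\overline{u}=2u(s-s'),\qquad \gamma=\frac{s'}{6}(1-\alpha)-u(s-s')V.$$ Define \begin{align*} R_{0,0}&=Vsu-\tfrac12Vs-Vs'u+\tfrac16\alpha s'+su-\tfrac12 s-s'u-\tfrac16 s'+1,\\ R_{0,1}&=Vsu-\tfrac12Vs-Vs'u+\tfrac16\alpha s'+\tfrac13 s',\\ R_{0,2}&=Vsu-\tfrac12Vs-Vs'u+\tfrac16\alpha s'-su+\tfrac12 s+s'u-\tfrac16 s',\\ R_{1,0}&=-2Vsu+2Vs'u-\tfrac13\alpha s'-2su+2s'u+\tfrac13 s',\\ R_{1,1}&=-2Vsu+2Vs'u-\tfrac13\alpha s'-\tfrac23 s'+1,\\ R_{1,2}&=-2Vsu+2Vs'u-\tfrac13\alpha s'+2su-2s'u+\tfrac13 s',\\ R_{2,0}&=Vsu+\tfrac12Vs-Vs'u+\tfrac16\alpha s'+su+\tfrac12 s-s'u-\tfrac16 s',\\ R_{2,1}&=Vsu+\tfrac12Vs-Vs'u+\tfrac16\alpha s'+\tfrac13 s',\\ R_{2,2}&=Vsu+\tfrac12Vs-Vs'u+\tfrac16\alpha s'-su-\tfrac12 s+s'u-\tfrac16 s'+1. \end{align*} Then $R_{i,j}\ge 0$ for all $i,j\in\{0,1,2\}$ if and only if $$\max\bigl(s'-1,\,|\overline{u}|\bigr)\le 2\gamma\le \min\bigl(2-s-|\overline{u}-sV|,\; s-|\overline{u}+sV|,\; s'-|sV|\bigr).$$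
   Context: The quantities $R_{i,j}$ are the entries of the relaxation matrix of the D1Q3 lattice Boltzmann scheme (velocities $-1,0,1$) with relative velocity $u$, advection velocity parameter $V$, equilibrium parameter $\alpha$ and relaxation parameters $s$ (for the first-order moment) and $s'$ (for the second-order moment); their non-negativity is equivalent to the relaxation step preserving non-negativity of the particle distributions. *)

(* Defs.v *)
From Stdlib Require Import Reals Lra.
Open Scope R_scope.

Definition ubar (u s s' : R) : R := 2 * u * (s - s').

Definition gamma (u s s' V alpha : R) : R := s' / 6 * (1 - alpha) - u * (s - s') * V.

Definition Rmat (u s s' V alpha : R) (i j : nat) : R :=
  match i, j with
  | 0%nat, 0%nat => V*s*u - 1/2*V*s - V*s'*u + 1/6*alpha*s' + s*u - 1/2*s - s'*u - 1/6*s' + 1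
  | 0%nat, 1%nat => V*s*u - 1/2*V*s - V*s'*u + 1/6*alpha*s' + 1/3*s'
  | 0%nat, 2%nat => V*s*u - 1/2*V*s - V*s'*u + 1/6*alpha*s' - s*u + 1/2*s + s'*u - 1/6*s'
  | 1%nat, 0%nat => -2*V*s*u + 2*V*s'*u - 1/3*alpha*s' - 2*s*u + 2*s'*u + 1/3*s'
  | 1%nat, 1%nat => -2*V*s*u + 2*V*s'*u - 1/3*alpha*s' - 2/3*s' + 1
  | 1%nat, 2%nat => -2*V*s*u + 2*V*s'*u - 1/3*alpha*s' + 2*s*u - 2*s'*u + 1/3*s'
  | 2%nat, 0%nat => V*s*u + 1/2*V*s - V*s'*u + 1/6*alpha*s' + s*u + 1/2*s - s'*u - 1/6*s'
  | 2%nat, 1%nat => V*s*u + 1/2*V*s - V*s'*u + 1/6*alpha*s' + 1/3*s'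
  | 2%nat, 2%nat => V*s*u + 1/2*V*s - V*s'*u + 1/6*alpha*s' - s*u - 1/2*s + s'*u - 1/6*s' + 1
  | _, _ => 0
  end.

(* Main.v *)
Require Import Defs.
From Stdlib Require Import Reals Lra Lia.
Open Scope R_scope.

Lemma Rabs_maj2' (x : R) : - x <= Rabs x.
Proof. rewrite <- Rabs_Ropp. apply Rle_abs. Qed.

Theorem proposition2 (u s s' V alpha : R) :
  (forall i j : nat, (i < 3)%nat -> (j < 3)%nat -> 0 <= Rmat u s s' V alpha i j) <->
  (Rmax (s' - 1) (Rabs (ubar u s s')) <= 2 * gamma u s s' V alpha /\
   2 * gamma u s s' V alpha <=
     Rmin (Rmin (2 - s - Rabs (ubar u s s' - s * V)) (s - Rabs (ubar u s s' + s * V)))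
          (s' - Rabs (s * V))).
Proof.
  split.
  - intros H.
    pose proof (H 0%nat 0%nat ltac:(lia) ltac:(lia)) as H00.
    pose proof (H 0%nat 1%nat ltac:(lia) ltac:(lia)) as H01.
    pose proof (H 0%nat 2%nat ltac:(lia) ltac:(lia)) as H02.
    pose proof (H 1%nat 0%nat ltac:(lia) ltac:(lia)) as H10.
    pose proof (H 1%nat 1%nat ltac:(lia) ltac:(lia)) as H11.
    pose proof (H 1%nat 2%nat ltac:(lia) ltac:(lia)) as H12.
    pose proof (H 2%nat 0%nat ltac:(lia) ltac:(lia)) as H20.
    pose proof (H 2%nat 1%nat ltac:(lia) ltac:(lia)) as H21.
    pose proof (H 2%nat 2%nat ltac:(lia) ltac:(lia)) as H22.
    clear H. simpl in *.
    unfold ubar, gamma, Rmax, Rmin, Rabs.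
    repeat match goal with
           | |- context [Rcase_abs ?x] => destruct (Rcase_abs x)
           | |- context [Rle_dec ?x ?y] => destruct (Rle_dec x y)
           end; split; nra.
  - intros [H1 H2].
    assert (A1 : s' - 1 <= 2 * gamma u s s' V alpha) by (eapply Rle_trans; [apply Rmax_l|exact H1]).
    assert (A2 : Rabs (ubar u s s') <= 2 * gamma u s s' V alpha) by (eapply Rle_trans; [apply Rmax_r|exact H1]).
    assert (B3 : 2 * gamma u s s' V alpha <= s' - Rabs (s * V)) by (eapply Rle_trans; [exact H2|apply Rmin_r]).
    assert (B12 : 2 * gamma u s s' V alpha <= Rmin (2 - s - Rabs (ubar u s s' - s * V)) (s - Rabs (ubar u s s' + s * V))) by (eapply Rle_trans; [exact H2|apply Rmin_l]).
    assert (B1 : 2 * gamma u s s' V alpha <= 2 - s - Rabs (ubar u s s' - s * V)) by (eapply Rle_trans; [exact B12|apply Rmin_l]).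
    assert (B2 : 2 * gamma u s s' V alpha <= s - Rabs (ubar u s s' + s * V)) by (eapply Rle_trans; [exact B12|apply Rmin_r]).
    clear H1 H2 B12.
    pose proof (Rle_abs (ubar u s s')) as C1.
    pose proof (Rabs_maj2' (ubar u s s')) as C2.
    pose proof (Rle_abs (ubar u s s' - s * V)) as C3.
    pose proof (Rabs_maj2' (ubar u s s' - s * V)) as C4.
    pose proof (Rle_abs (ubar u s s' + s * V)) as C5.
    pose proof (Rabs_maj2' (ubar u s s' + s * V)) as C6.
    pose proof (Rle_abs (s * V)) as C7.
    pose proof (Rabs_maj2' (s * V)) as C8.
    unfold ubar, gamma in *.
    intros i j Hi Hj.
    destruct i as [|[|[|i]]]; try lia; destruct j as [|[|[|j]]]; try lia; simpl; nra.
Qed.
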